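(* The 240 minimal vectors of the $E_8$ lattice can be partitioned into 15 coordinate frames. Consequently $E_8$ is the intersection of 15 pairwise congruent lattices in $\mathbb{R}^8$, each similar to $\mathbb{Z}^8$. *)

(* Defs.v *)
From HB Require Import structures.
From mathcomp Require Import all_boot all_order all_algebra.
From mathcomp Require Import reals.
Set Implicit Arguments. Unset Strict Implicit. Unset Printing Implicit Defensive.
Import Order.TTheory GRing.Theory Num.Theory.
Local Open Scope ring_scope.

Notation vec8 R := 'rV[R]_8.

Definition dot8 (R : realType) (u v : vec8 R) : R := \sum_(i < 8) u 0 i * v 0 i.

Definition E8 (R : realType) (x : vec8 R) : Prop :=
  ((forall i, x 0 i \is a Num.int) \/ (forall i, x 0 i - 2^-1 \is a Num.int))
  /\ (\sum_(i < 8) x 0 i) / 2 \is a Num.int.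

Definition E8_minimal (R : realType) (x : vec8 R) : Prop :=
  E8 x /\ x != 0 /\ forall y, E8 y -> y != 0 -> dot8 x x <= dot8 y y.

Definition coordinate_frame (R : realType) (F : vec8 R -> Prop) : Prop :=
  exists v : 'I_8 -> vec8 R,
    (forall i, v i != 0) /\
    (forall i j, i != j -> dot8 (v i) (v j) = 0) /\
    (forall i j, dot8 (v i) (v i) = dot8 (v j) (v j)) /\
    (forall x, F x <-> exists i, x = v i \/ x = - v i).

Definition lattice_of (R : realType) (b : 'I_8 -> vec8 R) (x : vec8 R) : Prop :=
  exists z : 'I_8 -> int, x = \sum_(i < 8) (z i)%:~R *: b i.

(* L is similar to Z^8: image of Z^8 under a similarity, i.e. L has a basis
   of pairwise orthogonal vectors all of the same positive norm c. *)
Definition similar_to_Z8 (R : realType) (L : vec8 R -> Prop) : Prop :=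
  exists (b : 'I_8 -> vec8 R) (c : R), 0 < c /\
    (forall i j, dot8 (b i) (b j) = if i == j then c else 0) /\
    (forall x, L x <-> lattice_of b x).

(* Congruent lattices: L2 is the image of L1 under an orthogonal map
   (for lattices, which contain 0, any isometry reduces to a linear one). *)
Definition congruent (R : realType) (L1 L2 : vec8 R -> Prop) : Prop :=
  exists Q : 'M[R]_8, Q *m Q^T = 1%:M /\
    (forall y, L2 y <-> exists x, L1 x /\ y = x *m Q).

(* Main.v *)
Require Import Defs.
From HB Require Import structures.
From mathcomp Require Import all_boot all_order all_algebra.
From mathcomp Require Import reals.
From mathcomp Require Import ring lra zify.
Set Implicit Arguments. Unset Strict Implicit. Unset Printing Implicit Defensive.
Import Order.TTheory GRing.Theory Num.Theory.
Local Open Scope ring_scope.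
Definition frames : seq (seq (seq int)) := [::
  [:: [:: (2); (0); (0); (0); (0); (0); (0); (2)]; [:: (2); (0); (0); (0); (0); (0); (0); (-2)]; [:: (0); (2); (0); (0); (0); (0); (2); (0)]; [:: (0); (2); (0); (0); (0); (0); (-2); (0)]; [:: (0); (0); (2); (0); (0); (2); (0); (0)]; [:: (0); (0); (2); (0); (0); (-2); (0); (0)]; [:: (0); (0); (0); (2); (2); (0); (0); (0)]; [:: (0); (0); (0); (2); (-2); (0); (0); (0)]];
  [:: [:: (0); (2); (0); (0); (0); (0); (0); (2)]; [:: (0); (2); (0); (0); (0); (0); (0); (-2)]; [:: (2); (0); (2); (0); (0); (0); (0); (0)]; [:: (2); (0); (-2); (0); (0); (0); (0); (0)]; [:: (0); (0); (0); (2); (0); (0); (2); (0)]; [:: (0); (0); (0); (2); (0); (0); (-2); (0)]; [:: (0); (0); (0); (0); (2); (2); (0); (0)]; [:: (0); (0); (0); (0); (2); (-2); (0); (0)]];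
  [:: [:: (0); (0); (2); (0); (0); (0); (0); (2)]; [:: (0); (0); (2); (0); (0); (0); (0); (-2)]; [:: (0); (2); (0); (2); (0); (0); (0); (0)]; [:: (0); (2); (0); (-2); (0); (0); (0); (0)]; [:: (2); (0); (0); (0); (2); (0); (0); (0)]; [:: (2); (0); (0); (0); (-2); (0); (0); (0)]; [:: (0); (0); (0); (0); (0); (2); (2); (0)]; [:: (0); (0); (0); (0); (0); (2); (-2); (0)]];
  [:: [:: (0); (0); (0); (2); (0); (0); (0); (2)]; [:: (0); (0); (0); (2); (0); (0); (0); (-2)]; [:: (0); (0); (2); (0); (2); (0); (0); (0)]; [:: (0); (0); (2); (0); (-2); (0); (0); (0)]; [:: (0); (2); (0); (0); (0); (2); (0); (0)]; [:: (0); (2); (0); (0); (0); (-2); (0); (0)]; [:: (2); (0); (0); (0); (0); (0); (2); (0)]; [:: (2); (0); (0); (0); (0); (0); (-2); (0)]];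
  [:: [:: (0); (0); (0); (0); (2); (0); (0); (2)]; [:: (0); (0); (0); (0); (2); (0); (0); (-2)]; [:: (0); (0); (0); (2); (0); (2); (0); (0)]; [:: (0); (0); (0); (2); (0); (-2); (0); (0)]; [:: (0); (0); (2); (0); (0); (0); (2); (0)]; [:: (0); (0); (2); (0); (0); (0); (-2); (0)]; [:: (2); (2); (0); (0); (0); (0); (0); (0)]; [:: (2); (-2); (0); (0); (0); (0); (0); (0)]];
  [:: [:: (0); (0); (0); (0); (0); (2); (0); (2)]; [:: (0); (0); (0); (0); (0); (2); (0); (-2)]; [:: (0); (0); (0); (0); (2); (0); (2); (0)]; [:: (0); (0); (0); (0); (2); (0); (-2); (0)]; [:: (2); (0); (0); (2); (0); (0); (0); (0)]; [:: (2); (0); (0); (-2); (0); (0); (0); (0)]; [:: (0); (2); (2); (0); (0); (0); (0); (0)]; [:: (0); (2); (-2); (0); (0); (0); (0); (0)]];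
  [:: [:: (0); (0); (0); (0); (0); (0); (2); (2)]; [:: (0); (0); (0); (0); (0); (0); (2); (-2)]; [:: (2); (0); (0); (0); (0); (2); (0); (0)]; [:: (2); (0); (0); (0); (0); (-2); (0); (0)]; [:: (0); (2); (0); (0); (2); (0); (0); (0)]; [:: (0); (2); (0); (0); (-2); (0); (0); (0)]; [:: (0); (0); (2); (2); (0); (0); (0); (0)]; [:: (0); (0); (2); (-2); (0); (0); (0); (0)]];
  [:: [:: (1); (1); (1); (1); (1); (1); (1); (1)]; [:: (1); (-1); (1); (-1); (1); (-1); (1); (-1)]; [:: (1); (1); (-1); (-1); (1); (1); (-1); (-1)]; [:: (1); (-1); (-1); (1); (1); (-1); (-1); (1)]; [:: (1); (1); (1); (1); (-1); (-1); (-1); (-1)]; [:: (1); (-1); (1); (-1); (-1); (1); (-1); (1)]; [:: (1); (1); (-1); (-1); (-1); (-1); (1); (1)]; [:: (1); (-1); (-1); (1); (-1); (1); (1); (-1)]];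
  [:: [:: (-1); (-1); (1); (1); (1); (1); (1); (1)]; [:: (-1); (1); (1); (-1); (1); (-1); (1); (-1)]; [:: (-1); (-1); (-1); (-1); (1); (1); (-1); (-1)]; [:: (-1); (1); (-1); (1); (1); (-1); (-1); (1)]; [:: (-1); (-1); (1); (1); (-1); (-1); (-1); (-1)]; [:: (-1); (1); (1); (-1); (-1); (1); (-1); (1)]; [:: (-1); (-1); (-1); (-1); (-1); (-1); (1); (1)]; [:: (-1); (1); (-1); (1); (-1); (1); (1); (-1)]];
  [:: [:: (-1); (1); (-1); (1); (1); (1); (1); (1)]; [:: (-1); (-1); (-1); (-1); (1); (-1); (1); (-1)]; [:: (-1); (1); (1); (-1); (1); (1); (-1); (-1)]; [:: (-1); (-1); (1); (1); (1); (-1); (-1); (1)]; [:: (-1); (1); (-1); (1); (-1); (-1); (-1); (-1)]; [:: (-1); (-1); (-1); (-1); (-1); (1); (-1); (1)]; [:: (-1); (1); (1); (-1); (-1); (-1); (1); (1)]; [:: (-1); (-1); (1); (1); (-1); (1); (1); (-1)]];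
  [:: [:: (-1); (1); (1); (-1); (1); (1); (1); (1)]; [:: (-1); (-1); (1); (1); (1); (-1); (1); (-1)]; [:: (-1); (1); (-1); (1); (1); (1); (-1); (-1)]; [:: (-1); (-1); (-1); (-1); (1); (-1); (-1); (1)]; [:: (-1); (1); (1); (-1); (-1); (-1); (-1); (-1)]; [:: (-1); (-1); (1); (1); (-1); (1); (-1); (1)]; [:: (-1); (1); (-1); (1); (-1); (-1); (1); (1)]; [:: (-1); (-1); (-1); (-1); (-1); (1); (1); (-1)]];
  [:: [:: (-1); (1); (1); (1); (-1); (1); (1); (1)]; [:: (-1); (-1); (1); (-1); (-1); (-1); (1); (-1)]; [:: (-1); (1); (-1); (-1); (-1); (1); (-1); (-1)]; [:: (-1); (-1); (-1); (1); (-1); (-1); (-1); (1)]; [:: (-1); (1); (1); (1); (1); (-1); (-1); (-1)]; [:: (-1); (-1); (1); (-1); (1); (1); (-1); (1)]; [:: (-1); (1); (-1); (-1); (1); (-1); (1); (1)]; [:: (-1); (-1); (-1); (1); (1); (1); (1); (-1)]];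
  [:: [:: (-1); (1); (1); (1); (1); (-1); (1); (1)]; [:: (-1); (-1); (1); (-1); (1); (1); (1); (-1)]; [:: (-1); (1); (-1); (-1); (1); (-1); (-1); (-1)]; [:: (-1); (-1); (-1); (1); (1); (1); (-1); (1)]; [:: (-1); (1); (1); (1); (-1); (1); (-1); (-1)]; [:: (-1); (-1); (1); (-1); (-1); (-1); (-1); (1)]; [:: (-1); (1); (-1); (-1); (-1); (1); (1); (1)]; [:: (-1); (-1); (-1); (1); (-1); (-1); (1); (-1)]];
  [:: [:: (-1); (1); (1); (1); (1); (1); (-1); (1)]; [:: (-1); (-1); (1); (-1); (1); (-1); (-1); (-1)]; [:: (-1); (1); (-1); (-1); (1); (1); (1); (-1)]; [:: (-1); (-1); (-1); (1); (1); (-1); (1); (1)]; [:: (-1); (1); (1); (1); (-1); (-1); (1); (-1)]; [:: (-1); (-1); (1); (-1); (-1); (1); (1); (1)]; [:: (-1); (1); (-1); (-1); (-1); (-1); (-1); (1)]; [:: (-1); (-1); (-1); (1); (-1); (1); (-1); (-1)]];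
  [:: [:: (-1); (1); (1); (1); (1); (1); (1); (-1)]; [:: (-1); (-1); (1); (-1); (1); (-1); (1); (1)]; [:: (-1); (1); (-1); (-1); (1); (1); (-1); (1)]; [:: (-1); (-1); (-1); (1); (1); (-1); (-1); (-1)]; [:: (-1); (1); (1); (1); (-1); (-1); (-1); (1)]; [:: (-1); (-1); (1); (-1); (-1); (1); (-1); (-1)]; [:: (-1); (1); (-1); (-1); (-1); (-1); (1); (-1)]; [:: (-1); (-1); (-1); (1); (-1); (1); (1); (1)]]].
Definition frame (k : nat) : seq (seq int) := nth [::] frames k.
Definition dotz (s t : seq int) : int := foldr +%R 0 (map (fun p => p.1 * p.2) (zip s t)).
Definition sumz (s : seq int) : int := foldr +%R 0 s.
Definition negs (s : seq int) : seq int := map -%R s.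
Definition in_table (s : seq int) : bool :=
  has (fun k => (s \in frame k) || (negs s \in frame k)) (iota 0 15).
Fixpoint allseqs (n : nat) (vals : seq int) : seq (seq int) :=
  if n is n'.+1 then [seq v :: s | v <- vals, s <- allseqs n' vals] else [:: [::]].

Definition chk_frames : bool :=
  (size frames == 15) &&
  all (fun f => (size f == 8) && all (fun s => size s == 8) f &&
     all (fun i => all (fun j => dotz (nth [::] f i) (nth [::] f j) == (if i == j then 8 else 0)) (iota 0 8)) (iota 0 8)) frames.
Definition vals_ok (s : seq int) := all (fun a => a \in [:: -2; 0; 2]) s || all (fun a => a \in [:: -1; 1]) s.
Definition chk_good : bool := all (fun f => all (fun s => vals_ok s && (4 %| sumz s)%Z) f) frames.
Definition chk_disj : bool :=
  all (fun k => all (fun k' => (k == k') || all (fun s => ~~ (s \in frame k') && ~~ (negs s \in frame k')) (frame k)) (iota 0 15)) (iota 0 15).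
Definition chk_enum : bool :=
  all (fun s => ((4 %| sumz s)%Z && (s != nseq 8 0)) ==> (8 <= dotz s s) && ((dotz s s == 8) ==> in_table s))
    (allseqs 8 [:: -2; 0; 2] ++ allseqs 8 [:: -1; 1]).
Definition vp (j : nat) (sg : int) : seq int := mkseq (fun n => if n == 0%N then 2 else if n == j then sg * 2 else 0) 8.
Definition chk_vp : bool := all (fun j => in_table (vp j 1) && in_table (vp j (-1))) (iota 1 7) && in_table (nseq 8 1).






Lemma chk_frames_ok : chk_frames. Proof. by vm_compute. Qed.
Lemma chk_good_ok : chk_good. Proof. by vm_compute. Qed.
Lemma chk_disj_ok : chk_disj. Proof. by vm_compute. Qed.
Lemma chk_enum_ok : chk_enum. Proof. by vm_compute. Qed.
Lemma chk_vp_ok : chk_vp. Proof. by vm_compute. Qed.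

Definition vof (R : realType) (s : seq int) : vec8 R := \row_(j < 8) ((nth 0 s j)%:~R / 2).

Lemma dot8E (R : realType) (u v : vec8 R) : dot8 u v = (u *m v^T) 0 0.
Proof. by rewrite /dot8 !mxE; apply: eq_bigr => j _; rewrite !mxE. Qed.

Lemma size8 (T : Type) (s : seq T) : size s = 8%N ->
  exists a0 a1 a2 a3 a4 a5 a6 a7, s = [:: a0; a1; a2; a3; a4; a5; a6; a7].
Proof.
do 8! (case: s => [|? s] //=); case: s => //= _.
by do 8! eexists.
Qed.

Lemma dot_vof (R : realType) s t : size s = 8%N -> size t = 8%N ->
  dot8 (vof R s) (vof R t) = (dotz s t)%:~R / 4.
Proof.
move=> /size8 [a0 [a1 [a2 [a3 [a4 [a5 [a6 [a7 ->]]]]]]]].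
move=> /size8 [b0 [b1 [b2 [b3 [b4 [b5 [b6 [b7 ->]]]]]]]].
rewrite /dot8 /dotz !big_ord_recl big_ord0 !mxE /=.
rewrite !(rmorphD, rmorphM) /=. by field.
Qed.

Lemma vof_opp (R : realType) s : size s = 8%N -> vof R (negs s) = - vof R s.
Proof.
move=> hs; apply/rowP => j; rewrite !mxE (nth_map 0) ?hs //.
by rewrite rmorphN mulNr.
Qed.

Lemma vof_inj (R : realType) s t : size s = 8%N -> size t = 8%N -> vof R s = vof R t -> s = t.
Proof.
move=> hs ht e; apply: (@eq_from_nth _ 0); first by rewrite hs ht.
move=> j; rewrite hs => hj.
have := congr1 (fun M : vec8 R => M 0 (Ordinal hj)) e; rewrite !mxE /=.
have h2 : (2 : R)^-1 != 0 by rewrite invr_eq0 pnatr_eq0.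
by move/(mulIf h2)/intr_inj.
Qed.

Lemma half_even (R : realType) (a : int) : (2 %| a)%Z -> (a%:~R / 2 : R) \is a Num.int.
Proof.
by case/dvdzP => k ->; rewrite intrM /= mulfK ?pnatr_eq0.
Qed.

Lemma sum_vof (R : realType) s : size s = 8%N ->
  \sum_(i < 8) (vof R s) 0 i = (sumz s)%:~R / 2.
Proof.
move=> /size8 [a0 [a1 [a2 [a3 [a4 [a5 [a6 [a7 ->]]]]]]]].
rewrite /sumz !big_ord_recl big_ord0 !mxE /=.
rewrite !rmorphD /=. by field.
Qed.

Lemma E8_vof (R : realType) s : size s = 8%N -> vals_ok s -> (4 %| sumz s)%Z -> E8 (vof R s).
Proof.
move=> hs hv h4; split.
  case/orP: hv => /all_nthP hv; [left | right] => i; rewrite mxE.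
    apply: half_even; have := hv 0 i; rewrite hs ltn_ord => /(_ isT).
    by rewrite !inE => /or3P [] /eqP ->.
  have -> : (nth 0 s i)%:~R / 2 - 2^-1 = ((nth 0 s i - 1)%:~R / 2 : R).
    by rewrite rmorphB /= rmorph1 mulrBl div1r.
  apply: half_even; have := hv 0 i; rewrite hs ltn_ord => /(_ isT).
  by rewrite !inE => /orP [] /eqP ->.
rewrite sum_vof //.
case/dvdzP: h4 => k ->; rewrite intrM /=.
have -> : (k%:~R * 4%:~R / 2 / 2 : R) = k%:~R by field.
by [].
Qed.

Lemma E8_opp (R : realType) (x : vec8 R) : E8 x -> E8 (- x).
Proof.
case=> [[hx|hx] hs]; split.
- by left => i; rewrite mxE rpredN.
- have -> : \sum_(i < 8) (- x) 0 i = - \sum_(i < 8) x 0 i.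
    by rewrite -sumrN; apply: eq_bigr => i _; rewrite mxE.
  by rewrite mulNr rpredN.
- right => i; rewrite mxE.
  have -> : - x 0 i - 2^-1 = - (x 0 i - 2^-1) - 1 by field.
  by rewrite rpredB ?rpredN ?rpred1.
- have -> : \sum_(i < 8) (- x) 0 i = - \sum_(i < 8) x 0 i.
    by rewrite -sumrN; apply: eq_bigr => i _; rewrite mxE.
  by rewrite mulNr rpredN.
Qed.

Lemma E8_nf (R : realType) (x : vec8 R) : E8 x -> exists (z : 'I_8 -> int) (e : int),
  (e = 0 \/ e = 1) /\ (forall j, x 0 j = (2 * z j + e)%:~R / 2) /\
  exists m : int, \sum_(j < 8) z j = 2 * m.
Proof.
case=> [[hx|hx] hs]; have /intrP [m hm] := hs.
- exists (fun j => Num.floor (x 0 j)), 0; split; first by left.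
  have hz : forall j, x 0 j = (Num.floor (x 0 j))%:~R by move=> j; rewrite floorK // hx.
  split.
    move=> j; rewrite addr0 intrM /= -hz; by field.
  exists m; apply: (@intr_inj R _ _). rewrite rmorph_sum /= intrM /= -hm.
  rewrite (eq_bigr (fun j => x 0 j)); last by move=> j _; rewrite -hz.
  by field.
- exists (fun j => Num.floor (x 0 j - 2^-1)), 1; split; first by right.
  have hz : forall j, x 0 j = (Num.floor (x 0 j - 2^-1))%:~R + 2^-1.
    by move=> j; rewrite floorK ?subrK // hx.
  split.
    move=> j; rewrite {1}hz !(rmorphD, rmorphM, rmorph1) /=; by field.
  exists (m - 2); apply: (@intr_inj R _ _); rewrite rmorph_sum /= intrM /= rmorphB /= -hm.
  rewrite (eq_bigr (fun j => x 0 j - 2^-1)); last first.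
    by move=> j _; rewrite [in RHS]hz addrK.
  rewrite sumrB sumr_const card_ord. by field.
Qed.

Lemma E8_dot_int (R : realType) (x y : vec8 R) : E8 x -> E8 y -> dot8 x y \is a Num.int.
Proof.
move=> /E8_nf [z [e [he [hx [m hm]]]]] /E8_nf [w [f [hf [hy [m' hm']]]]].
have E : dot8 x y = (\sum_(j < 8) z j * w j + 2 * e * f)%:~R
    + f%:~R * ((\sum_(j < 8) z j)%:~R / 2) + e%:~R * ((\sum_(j < 8) w j)%:~R / 2).
  rewrite /dot8; under eq_bigr do rewrite hx hy.
  rewrite !big_ord_recl !big_ord0 !(rmorphD, rmorphM) /=; by field.
have h2 : forall k : int, ((2 * k)%:~R / 2 : R) = k%:~R.
  by move=> k; rewrite intrM /=; field.
rewrite E hm hm' !h2.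
by rewrite !rpredD ?rpredM ?intr_int.
Qed.

Lemma mem_allseqs n (vals : seq int) s : size s = n -> all (fun a => a \in vals) s -> s \in allseqs n vals.
Proof.
elim: n s => [|n IH] [|v s] //= [hs] /andP [hv ha].
by apply/allpairsPdep; exists v, s; split => //; apply: IH.
Qed.

Lemma sumzE s : sumz s = \sum_(x <- s) x.
Proof. by elim: s => [|x s IH]; rewrite ?big_nil ?big_cons //= IH. Qed.

Lemma sumz_mk (a : 'I_8 -> int) : sumz (mkseq (fun n => a (inord n)) 8) = \sum_(j < 8) a j.
Proof.
rewrite sumzE /mkseq big_map.
have -> : iota 0 8 = index_iota 0 8 by [].
by rewrite big_mkord; apply: eq_bigr => j _; rewrite inord_val.
Qed.

Lemma sq_even (z : int) : (2 * z) * (2 * z) <= 8 -> 2 * z \in [:: -2; 0; 2].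
Proof.
move=> h; have : (z = -1 \/ z = 0 \/ z = 1)%R by nia.
by case=> [->|[->|->]].
Qed.

Lemma sq_odd (z : int) : (2 * z + 1) * (2 * z + 1) <= 1 -> 2 * z + 1 \in [:: -1; 1].
Proof.
move=> h; have : (z = -1 \/ z = 0)%R by nia.
by case=> [->|->].
Qed.

Lemma sum_bound (a : 'I_8 -> int) (b : int) : (forall j, 0 <= a j) -> \sum_j a j <= b -> forall j, a j <= b.
Proof.
move=> h0 hs j; apply: le_trans hs; rewrite (bigD1 j) //= lerDl.
by apply: sumr_ge0 => i _.
Qed.

Lemma sum_bound1 (a : 'I_8 -> int) : (forall j, 1 <= a j) -> \sum_j a j <= 8 -> forall j, a j <= 1.
Proof.
move=> h1 hs j; move: hs; rewrite (bigD1 j) //=.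
have : 7 <= \sum_(i < 8 | i != j) a i.
  apply: le_trans (ler_sum _ (fun i _ => h1 i)).
  by rewrite sumr_const cardC1 card_ord.
move: (\sum_(i < 8 | i != j) a i) => S; lia.
Qed.

Definition dom8 := allseqs 8 [:: -2; 0; 2] ++ allseqs 8 [:: -1; 1].

Lemma E8_small (R : realType) (x : vec8 R) : E8 x -> dot8 x x <= 2 ->
  exists s, [/\ s \in dom8, (4 %| sumz s)%Z & x = vof R s].
Proof.
move=> /E8_nf [z [e [he [hx [m hm]]]]] hd.
pose a j := 2 * z j + e.
pose s := mkseq (fun n => a (inord n)) 8.
have hs : size s = 8%N by rewrite size_mkseq.
have hxs : x = vof R s.
  by apply/rowP => j; rewrite !mxE nth_mkseq // inord_val hx.
have hS : \sum_j a j * a j <= 8.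
  have E : dot8 x x = (\sum_j a j * a j)%:~R / 4.
    rewrite /dot8 rmorph_sum mulr_suml; apply: eq_bigr => j _.
    by rewrite hx rmorphM /= rmorphD rmorphM /=; field.
  rewrite E in hd; rewrite -(ler_int R); lra.
exists s; split => //.
- have hb : forall j, a j * a j <= 8.
    by apply: (sum_bound _ hS) => j; rewrite -expr2 sqr_ge0.
  rewrite mem_cat; case: he => he; apply/orP; [left | right];
    apply: mem_allseqs => //; apply/allP => t /mapP [n _ ->].
  + have := hb (inord n); rewrite /a he addr0; exact: sq_even.
  + have h1 : forall j, 1 <= a j * a j by move=> j; rewrite /a he; nia.
    have := sum_bound1 h1 hS (inord n); rewrite /a he; exact: sq_odd.
- rewrite sumz_mk; apply/dvdzP; exists (m + 2 * e).
  rewrite /a big_split /= -mulr_sumr hm sumr_const card_ord -mulr_natr; ring.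
Qed.

Lemma size_allseqs n (vals : seq int) s : s \in allseqs n vals -> size s = n.
Proof.
elim: n s => [|n IH] s /=; first by rewrite inE => /eqP ->.
by case/allpairsPdep => [v [t [_ /IH ht ->]]] /=; rewrite ht.
Qed.

Lemma enum_fact s : s \in dom8 -> (4 %| sumz s)%Z -> s != nseq 8 0 ->
  (8 <= dotz s s) /\ (dotz s s = 8 -> in_table s).
Proof.
move=> hs h4 h0; have /allP H := chk_enum_ok.
have := H s hs; rewrite h4 h0 /= => /andP [-> h8]; split => // e.
by move: h8; rewrite e eqxx.
Qed.

Lemma dom8_size s : s \in dom8 -> size s = 8%N.
Proof. by rewrite mem_cat => /orP [] /size_allseqs. Qed.

Lemma vof_nseq0 (R : realType) : vof R (nseq 8 0) = 0.
Proof. by apply/rowP => j; rewrite !mxE nth_nseq ltn_ord mul0r. Qed.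

Lemma frame_ok k : (k < 15)%N -> size (frame k) = 8%N /\
  (forall i, (i < 8)%N -> size (nth [::] (frame k) i) = 8%N /\
     vals_ok (nth [::] (frame k) i) /\ (4 %| sumz (nth [::] (frame k) i))%Z) /\
  (forall i j, (i < 8)%N -> (j < 8)%N ->
     dotz (nth [::] (frame k) i) (nth [::] (frame k) j) = if i == j then 8 else 0).
Proof.
move=> hk.
have hf : frame k \in frames by apply: mem_nth; have := chk_frames_ok; case/andP => /eqP ->.
have := chk_frames_ok; case/andP => _ /allP /(_ _ hf) /andP [/andP [/eqP hs /allP hsz] /allP hd].
have := chk_good_ok; move=> /allP /(_ _ hf) /allP hg.
split=> //; split.
  move=> i hi; have hm : nth [::] (frame k) i \in frame k by apply: mem_nth; rewrite hs.
  split; first by apply/eqP; apply: hsz.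
  by have /andP [] := hg _ hm.
move=> i j hi hj.
have hi' : i \in iota 0 8 by rewrite mem_iota.
have hj' : j \in iota 0 8 by rewrite mem_iota.
by have /allP /(_ j hj') /eqP := hd i hi'.
Qed.

Definition fv (k : 'I_15) (i : 'I_8) : seq int := nth [::] (frame k) i.
Definition vv (R : realType) (k : 'I_15) (i : 'I_8) : vec8 R := vof R (fv k i).

Lemma fv_size k i : size (fv k i) = 8%N.
Proof. by have [_ [H _]] := frame_ok (ltn_ord k); case: (H i (ltn_ord i)). Qed.

Lemma dot_vv (R : realType) k i j : dot8 (vv R k i) (vv R k j) = if i == j then 2 else 0.
Proof.
rewrite /vv dot_vof ?fv_size //.
have [_ [_ /(_ i j (ltn_ord i) (ltn_ord j)) ->]] := frame_ok (ltn_ord k).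
rewrite -[nat_of_ord i == nat_of_ord j]/(i == j); case: (i == j); [rewrite mulrz_nat; by field | by rewrite rmorph0 mul0r].
Qed.

Lemma E8_vv (R : realType) k i : E8 (vv R k i).
Proof.
have [_ [/(_ i (ltn_ord i)) [hs [hv h4]] _]] := frame_ok (ltn_ord k).
exact: E8_vof.
Qed.

Lemma dot8_0 (R : realType) (v : vec8 R) : dot8 0 v = 0.
Proof. by rewrite /dot8 big1 // => i _; rewrite mxE mul0r. Qed.

Lemma vv_neq0 (R : realType) k i : vv R k i != 0.
Proof.
apply/eqP => h; have := dot_vv R k i i; rewrite eqxx h dot8_0 => /eqP.
by rewrite eq_sym pnatr_eq0.
Qed.

Lemma dot8N (R : realType) (u v : vec8 R) : dot8 u (- v) = - dot8 u v.
Proof. by rewrite /dot8 -sumrN; apply: eq_bigr => i _; rewrite mxE mulrN. Qed.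

Lemma dot8Nl (R : realType) (u v : vec8 R) : dot8 (- u) v = - dot8 u v.
Proof. by rewrite /dot8 -sumrN; apply: eq_bigr => i _; rewrite mxE mulNr. Qed.

Lemma dot8Z (R : realType) a c (u v : vec8 R) : dot8 (a *: u) (c *: v) = a * c * dot8 u v.
Proof. by rewrite /dot8 mulr_sumr; apply: eq_bigr => i _; rewrite !mxE; ring. Qed.

Lemma dot8Zl (R : realType) a (u v : vec8 R) : dot8 (a *: u) v = a * dot8 u v.
Proof. by rewrite /dot8 mulr_sumr; apply: eq_bigr => i _; rewrite !mxE; ring. Qed.

Lemma dot8_suml (R : realType) (f : 'I_8 -> vec8 R) (v : vec8 R) :
  dot8 (\sum_i f i) v = \sum_i dot8 (f i) v.
Proof.
rewrite /dot8 (exchange_big) /=; apply: eq_bigr => j _.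
by rewrite summxE mulr_suml.
Qed.

Definition FF (R : realType) (k : 'I_15) (x : vec8 R) : Prop :=
  exists i, x = vv R k i \/ x = - vv R k i.

Lemma frame_size (k : nat) : (k < 15)%N -> size (frame k) = 8%N.
Proof. by case/frame_ok. Qed.

Lemma in_frame_nth (k : nat) (hk : (k < 15)%N) s : s \in frame k ->
  exists i : 'I_8, fv (Ordinal hk) i = s.
Proof.
move=> hs; have hi : (index s (frame k) < 8)%N by rewrite -(frame_size hk) index_mem.
by exists (Ordinal hi); rewrite /fv /= nth_index.
Qed.

Lemma negsK : involutive negs.
Proof. by move=> s; rewrite /negs -map_comp map_id_in // => a _ /=; rewrite opprK. Qed.

Lemma in_table_vv (R : realType) s : in_table s -> exists k i, vof R s = vv R k i \/ vof R s = - vv R k i.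
Proof.
case/hasP => k; rewrite mem_iota /= => hk /orP [hs|hs]; exists (Ordinal hk).
  by have [i hi] := in_frame_nth hk hs; exists i; left; rewrite /vv hi.
have [i hi] := in_frame_nth hk hs; exists i; right; rewrite /vv hi.
have hsz : size s = 8%N.
  by have := fv_size (Ordinal hk) i; rewrite hi size_map.
by rewrite vof_opp // opprK.
Qed.

Lemma E8_ge2 (R : realType) (y : vec8 R) : E8 y -> y != 0 -> 2 <= dot8 y y.
Proof.
move=> hy hy0; have [//|hlt] := lerP 2 (dot8 y y).
have [s [hs h4 e]] := E8_small hy (ltW hlt); subst y.
have hn : s != nseq 8 0 by apply: contra hy0 => /eqP ->; rewrite vof_nseq0.
have [h8 _] := enum_fact hs h4 hn.
move: hlt; rewrite dot_vof ?dom8_size // => hlt.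
have : (8 : R) <= (dotz s s)%:~R by rewrite -[8 : R]/((8%:R : int)%:~R) ler_int.
lra.
Qed.

Lemma min_iff (R : realType) (x : vec8 R) : E8_minimal x <-> exists k, FF k x.
Proof.
split.
  case=> hx [hx0 hmin].
  have hd : dot8 x x <= 2.
    have := hmin _ (E8_vv R ord0 ord0) (vv_neq0 R ord0 ord0).
    by rewrite dot_vv eqxx.
  have [s [hs h4 e]] := E8_small hx hd; subst x.
  have hn : s != nseq 8 0 by apply: contra hx0 => /eqP ->; rewrite vof_nseq0.
  have [h8 ht] := enum_fact hs h4 hn.
  have e8 : dotz s s = 8.
    apply/eqP; rewrite eq_le h8 andbT -(ler_int R).
    move: hd; rewrite dot_vof ?dom8_size // => hd.
    rewrite -[(8%:R : int)%:~R]/(8 : R); lra.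
  have [k [i hki]] := in_table_vv R (ht e8).
  by exists k, i.
case=> k [i e].
have hn : dot8 x x = 2.
  by case: e => ->; rewrite ?dot8N ?dot8Nl ?opprK dot_vv eqxx.
split; first by case: e => ->; [exact: E8_vv | apply: E8_opp; exact: E8_vv].
split; first by case: e => ->; rewrite ?oppr_eq0 vv_neq0.
by move=> y hy hy0; rewrite hn; exact: E8_ge2.
Qed.

Lemma disj (R : realType) k k' (x : vec8 R) : k != k' -> FF k x -> FF k' x -> False.
Proof.
move=> hkk [i ei] [j ej].
have hs := fv_size k i; have ht := fv_size k' j.
have hmem : fv k i \in frame k by apply: mem_nth; rewrite frame_size.
have hmem' : fv k' j \in frame k' by apply: mem_nth; rewrite frame_size.
have key : fv k i = fv k' j \/ negs (fv k i) = fv k' j.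
  have hn : size (negs (fv k i)) = 8%N by rewrite size_map.
  case: ei ej => -> [] e.
  - by left; apply: (@vof_inj R).
  - by right; apply: (@vof_inj R) => //; rewrite vof_opp // -/(vv R k i) -/(vv R k' j) e opprK.
  - by right; apply: (@vof_inj R) => //; rewrite vof_opp // -/(vv R k i) -/(vv R k' j) e.
  - by left; apply: (@vof_inj R) => //; apply: oppr_inj.
have /allP /(_ (val k)) := chk_disj_ok.
rewrite mem_iota ltn_ord => /(_ isT) /allP /(_ (val k')).
rewrite mem_iota ltn_ord => /(_ isT) /orP [/eqP /val_inj hk|/allP /(_ _ hmem)].
  by rewrite hk eqxx in hkk.
by case: key => ->; rewrite hmem' ?andbF.
Qed.

Lemma coord_frame (R : realType) k : coordinate_frame (@FF R k).
Proof.
exists (vv R k); split; first exact: vv_neq0.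
split; first by move=> i j hij; rewrite dot_vv (negbTE hij).
split; first by move=> i j; rewrite !dot_vv !eqxx.
by [].
Qed.

Definition AA (R : realType) (k : 'I_15) : 'M[R]_8 := \matrix_(i, j) (vv R k i) 0 j.

Lemma row_AA (R : realType) k i : row i (AA R k) = vv R k i.
Proof. by apply/rowP => j; rewrite !mxE. Qed.

Lemma AAt (R : realType) k : AA R k *m (AA R k)^T = 2%:M.
Proof.
apply/matrixP => i j; rewrite mxE [RHS]mxE.
have -> : (2 : R) *+ (i == j) = if i == j then 2 else 0 by case: (i == j).
rewrite -(dot_vv R k) /dot8.
by apply: eq_bigr => l _; rewrite !mxE.
Qed.

Lemma AtA (R : realType) k : (AA R k)^T *m AA R k = 2%:M.
Proof.
have h : AA R k *m (2^-1 *: (AA R k)^T) = 1%:M.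
  by rewrite -scalemxAr AAt scale_scalar_mx mulVf // pnatr_eq0.
have := mulmx1C h; rewrite -scalemxAl => h2.
move: (congr1 (fun M => 2 *: M) h2) => /=; rewrite scalerA mulfV ?pnatr_eq0 // scale1r => ->.
by rewrite scale_scalar_mx mulr1.
Qed.

Definition bb (R : realType) k i : vec8 R := 2^-1 *: vv R k i.
Definition LL (R : realType) k : vec8 R -> Prop := lattice_of (bb R k).
Definition QQ (R : realType) k k' : 'M[R]_8 := 2^-1 *: ((AA R k)^T *m AA R k').

Lemma QQt (R : realType) k k' : QQ R k k' *m (QQ R k k')^T = 1%:M.
Proof.
have tZ : forall (a : R) (M : 'M[R]_8), (a *: M)^T = a *: M^T.
  by move=> a M; apply/matrixP => i j; rewrite !mxE.
rewrite /QQ tZ trmx_mul trmxK -scalemxAl -scalemxAr scalerA.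
rewrite !mulmxA -(mulmxA _ (AA R k')) AAt mul_mx_scalar -scalemxAl AtA.
rewrite scalerA scale_scalar_mx; congr (_%:M); by field.
Qed.

Lemma bbQ (R : realType) k k' i : bb R k i *m QQ R k k' = bb R k' i.
Proof.
rewrite /bb /QQ -!row_AA !rowE -scalemxAl -scalemxAr scalerA.
rewrite !mulmxA -(mulmxA _ (AA R k) (AA R k)^T) AAt mul_mx_scalar -scalemxAl scalerA.
congr (_ *: _); by field.
Qed.

Lemma lat_map (R : realType) k k' (z : 'I_8 -> int) :
  (\sum_i (z i)%:~R *: bb R k i) *m QQ R k k' = \sum_i (z i)%:~R *: bb R k' i.
Proof. by rewrite mulmx_suml; apply: eq_bigr => i _; rewrite -scalemxAl bbQ. Qed.

Lemma LL_cong (R : realType) k k' : congruent (@LL R k) (@LL R k').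
Proof.
exists (QQ R k k'); split; first exact: QQt.
move=> y; split.
  case=> z ->; exists (\sum_i (z i)%:~R *: bb R k i); split; first by exists z.
  by rewrite lat_map.
by case=> x [[z ->] ->]; exists z; rewrite lat_map.
Qed.

Lemma LL_sim (R : realType) k : similar_to_Z8 (@LL R k).
Proof.
exists (bb R k), 2^-1; split; first by rewrite invr_gt0 ltr0n.
split=> // i j; rewrite /bb dot8Z dot_vv.
by case: (i == j); [field | rewrite mulr0].
Qed.

Lemma expand (R : realType) k (x : vec8 R) :
  x = \sum_i dot8 x (vv R k i) *: bb R k i.
Proof.
have e1 : \sum_i dot8 x (vv R k i) *: bb R k i = 2^-1 *: (x *m (AA R k)^T *m AA R k).
  rewrite mulmx_sum_row scaler_sumr; apply: eq_bigr => i _.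
  rewrite /bb scalerA mulrC -scalerA row_AA; congr (_ *: (_ *: _)).
  by rewrite !mxE /dot8; apply: eq_bigr => l _; rewrite !mxE.
by rewrite e1 -mulmxA AtA mul_mx_scalar scalerA mulVf ?pnatr_eq0 // scale1r.
Qed.

Lemma E8_LL (R : realType) k (x : vec8 R) : E8 x -> LL k x.
Proof.
move=> hx; exists (fun i => Num.floor (dot8 x (vv R k i))).
rewrite {1}(expand k x); apply: eq_bigr => i _.
by rewrite floorK //; apply: E8_dot_int => //; apply: E8_vv.
Qed.

Lemma LL_dot (R : realType) k (x : vec8 R) : LL k x -> forall i, dot8 x (vv R k i) \is a Num.int.
Proof.
case=> z -> i; rewrite dot8_suml (bigD1 i) //= big1 ?addr0.
  by rewrite /bb dot8Zl dot8Zl dot_vv eqxx mulrA mulrAC mulfK ?pnatr_eq0 // intr_int.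
by move=> l hl; rewrite /bb dot8Zl dot8Zl dot_vv (negbTE hl) !mulr0.
Qed.

Lemma table_dot (R : realType) (x : vec8 R) s : (forall k, LL k x) -> in_table s ->
  dot8 x (vof R s) \is a Num.int.
Proof.
move=> hL /(in_table_vv R) [k [i [->|->]]]; rewrite ?dot8N ?rpredN; exact: LL_dot.
Qed.

Lemma dot_vp (R : realType) (x : vec8 R) (j : 'I_8) (sg : int) : j != ord0 ->
  dot8 x (vof R (vp j sg)) = x 0 ord0 + sg%:~R * x 0 j.
Proof.
move=> hj; rewrite /dot8 (bigD1 ord0) //= (bigD1 j) //= big1 ?addr0.
  rewrite !mxE !nth_mkseq //= eqxx.
  have -> : (nat_of_ord j == 0%N) = false by apply/negbTE.
  rewrite rmorphM /=; by field.
move=> l /andP [hl0 hlj]; rewrite !mxE nth_mkseq //.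
have -> : (nat_of_ord l == 0%N) = false by apply/negbTE.
have -> : (nat_of_ord l == nat_of_ord j) = false by apply/negbTE.
by rewrite rmorph0 mul0r mulr0.
Qed.

Lemma dot_ones (R : realType) (x : vec8 R) :
  dot8 x (vof R (nseq 8 1)) = (\sum_(i < 8) x 0 i) / 2.
Proof.
by rewrite /dot8 mulr_suml; apply: eq_bigr => i _; rewrite !mxE nth_nseq ltn_ord rmorph1 mul1r.
Qed.

Lemma half_cases (R : realType) (y : R) : 2 * y \is a Num.int ->
  y \is a Num.int \/ y - 2^-1 \is a Num.int.
Proof.
case/intrP => n hn.
have hd := divz_eq n 2.
have h0 : 0 <= (n %% 2)%Z by apply: modz_ge0.
have h1 : (n %% 2 < 2)%Z by apply: ltz_pmod.
have [hr|hr] : (n %% 2 = 0 \/ n %% 2 = 1)%Z by lia.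
  left; apply/intrP; exists (n %/ 2)%Z.
  have : 2 * y = ((n %/ 2)%Z * 2)%:~R by rewrite hn {1}hd hr addr0.
  rewrite intrM /= => h; apply: (mulfI (x := 2)); rewrite ?pnatr_eq0 // h; by ring.
right; apply/intrP; exists (n %/ 2)%Z.
have : 2 * y = ((n %/ 2)%Z * 2 + 1)%:~R by rewrite hn {1}hd hr.
rewrite rmorphD rmorphM /= rmorph1 => h.
apply: (mulfI (x := 2)); rewrite ?pnatr_eq0 // mulrBr h; by field.
Qed.

Lemma LL_E8 (R : realType) (x : vec8 R) : (forall k, LL k x) -> E8 x.
Proof.
move=> hL; have /andP [/allP hvp hones] := chk_vp_ok.
have hv : forall j : 'I_8, j != ord0 ->
    x 0 ord0 + x 0 j \is a Num.int /\ x 0 ord0 - x 0 j \is a Num.int.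
  move=> j hj; have : val j \in iota 1 7.
    by rewrite mem_iota ltn_ord andbT lt0n.
  move/hvp/andP => [h1 h2]; split.
    by have := table_dot hL h1; rewrite dot_vp // rmorph1 mul1r.
  by have := table_dot hL h2; rewrite dot_vp // rmorphN rmorph1 mulN1r.
split; last by rewrite -dot_ones; exact: table_dot.
have h1 : (Ordinal (isT : (1 < 8)%N)) != ord0 by [].
have [hp hm] := hv _ h1.
have : 2 * x 0 ord0 \is a Num.int.
  have -> : 2 * x 0 ord0 = (x 0 ord0 + x 0 (Ordinal (isT : (1 < 8)%N)))
      + (x 0 ord0 - x 0 (Ordinal (isT : (1 < 8)%N))) by ring.
  by rewrite rpredD.
case/half_cases => h0; [left | right] => j; have [->|hj] := eqVneq j ord0 => //;
  have [hp' hm'] := hv j hj.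
- have -> : x 0 j = (x 0 ord0 + x 0 j) - x 0 ord0 by ring.
  by rewrite rpredB.
- have -> : x 0 j - 2^-1 = (x 0 ord0 + x 0 j) - (x 0 ord0 - 2^-1) - 1 by field.
  by apply: rpredB; [apply: rpredB | exact: rpred1].
Qed.

Theorem mainTheorem7 (R : realType) :
  (exists F : 'I_15 -> (vec8 R -> Prop),
      (forall k, coordinate_frame (F k)) /\
      (forall k k' x, k != k' -> F k x -> F k' x -> False) /\
      (forall x, E8_minimal x <-> exists k, F k x))
  /\
  (exists L : 'I_15 -> (vec8 R -> Prop),
      (forall k, similar_to_Z8 (L k)) /\
      (forall k k', congruent (L k) (L k')) /\
      (forall x, E8 x <-> forall k, L k x)).
Proof.
split.
  exists (@FF R); split; first exact: coord_frame.
  split; first by move=> k k' x hkk; exact: disj.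
  exact: min_iff.
exists (@LL R); split; first exact: LL_sim.
split; first exact: LL_cong.
by move=> x; split; [move=> hx k; exact: E8_LL | exact: LL_E8].
Qed.
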